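(* Let $\mathbb{X}$ be an infinite-dimensional (real or complex) Banach space and let $\mathcal{B}=(\mathbf{e}_n)_{n=1}^\infty$ be a semi-normalized basis of $\mathbb{X}$ with $C_w=1$, i.e. $\|\mathcal{G}_N(x)\|\le\|x\|$ for every $x\in\mathbb{X}$, every $N\in\mathbb{N}$ and every choice of greedy set $\Lambda_N(x)$. Then $C_t=1$, i.e. $\|x-\mathcal{G}_N(x)\|\le\|x\|$ for all such $x$, $N$, $\Lambda_N(x)$; in particular $\mathcal{B}$ is $1$-quasi-greedy.
   Context: A basis $(\mathbf{e}_n)_{n=1}^\infty$ is a Schauder basis; semi-normalized means $0<\inf_n\|\mathbf{e}_n\|\le\sup_n\|\mathbf{e}_n\|<\infty$. Let $(\mathbf{e}_n^* )$ be the biorthogonal functionals. For $x\in\mathbb{X}$ and $N\in\mathbb{N}$, a greedy set $\Lambda_N(x)$ is any set of $N$ indices with $\min\{|\mathbf{e}_j^*(x)|: j\in\Lambda_N(x)\}\ge\max\{|\mathbf{e}_j^*(x)|: j\notin\Lambda_N(x)\}$, and $\mathcal{G}_N(x)=\sum_{j\in\Lambda_N(x)}\mathbf{e}_j^*(x)\mathbf{e}_j$. $C_w$ is the smallest constant $C$ with $\|\mathcal{G}_N(x)\|\le C\|x\|$ for all $x,N$ and choices of greedy sets; $C_t$ is the smallest $\tilde C$ with $\|x-\mathcal{G}_N(x)\|\le\tilde C\|x\|$ for all $x,N$ and choices of greedy sets. The quasi-greedy constant is $C_{qg}=\max\{C_w,C_t\}$, and the basis is $1$-quasi-greedy if $C_{qg}\le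 1$. *)

(* Defs.v *)
From HB Require Import structures.
From mathcomp Require Import all_boot all_order all_algebra.
From mathcomp Require Import all_classical all_reals all_analysis.
From mathcomp.real_closed Require Import complex.
Set Implicit Arguments. Unset Strict Implicit. Unset Printing Implicit Defensive.
Import Order.TTheory GRing.Theory Num.Theory.
Import numFieldNormedType.Exports.
Local Open Scope ring_scope.
Local Open Scope classical_set_scope.

Section Greedy.
Variables (K : numFieldType) (V : normedModType K).

Definition schauder_basis (e : nat -> V) : Prop :=
  forall x : V, exists! a : nat -> K,
    (fun N => \sum_(n < N) a n *: e n) @ \oo --> x.

Definition coefficient_functionals (e : nat -> V) (estar : nat -> V -> K) : Prop :=
  forall x : V, (fun N => \sum_(n < N) estar n x *: e n) @ \oo --> x.

Definition semi_normalized (e : nat -> V) : Prop :=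
  exists c C : K, 0 < c /\ forall n, c <= `|e n| <= C.

Definition greedy_set (estar : nat -> V -> K) (x : V) (A : seq nat) : Prop :=
  uniq A /\ forall j k, j \in A -> k \notin A -> `|estar k x| <= `|estar j x|.

Definition greedy_sum (e : nat -> V) (estar : nat -> V -> K) (x : V)
  (A : seq nat) : V := \sum_(j <- A) estar j x *: e j.

Definition Cw_le1 e estar : Prop :=
  forall x A, greedy_set estar x A -> `|greedy_sum e estar x A| <= `|x|.

Definition Ct_le1 e estar : Prop :=
  forall x A, greedy_set estar x A -> `|x - greedy_sum e estar x A| <= `|x|.

Definition one_quasi_greedy e estar : Prop := Cw_le1 e estar /\ Ct_le1 e estar.

Definition corollary_claim : Prop :=
  forall (e : nat -> V) (estar : nat -> V -> K),
    schauder_basis e -> coefficient_functionals e estar -> semi_normalized e ->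
    Cw_le1 e estar -> Ct_le1 e estar /\ one_quasi_greedy e estar.
End Greedy.

(* Main.v *)
Require Import Defs.
From HB Require Import structures.
From mathcomp Require Import all_boot all_order all_algebra.
From mathcomp Require Import all_classical all_reals all_analysis.
From mathcomp.real_closed Require Import complex.
Unset Printing Implicit Defensive.
Import Order.TTheory GRing.Theory Num.Theory.
Import numFieldNormedType.Exports.
Local Open Scope ring_scope.
Local Open Scope classical_set_scope.

Section Gen.
Variables (K : numFieldType) (V : normedModType K).
Variables (e : nat -> V) (estar : nat -> V -> K).
Hypothesis Hb : schauder_basis e.
Hypothesis Hc : coefficient_functionals e estar.
Hypothesis Hs : semi_normalized e.

Lemma coef_eq (a : nat -> K) (z : V) :
  (fun N => \sum_(n < N) a n *: e n) @ \oo --> z -> forall n, estar n z = a n.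
Proof.
move=> Ha n; have [a0 [_ Hu]] := Hb z.
have h1 := Hu (fun m => estar m z) (Hc z); have h2 := Hu a Ha.
by rewrite -(congr1 (fun f => f n) h1) (congr1 (fun f => f n) h2).
Qed.

Lemma coef_bound (x : V) : exists M, 0 < M /\ forall k, `|estar k x| <= M.
Proof.
have [c [C [c0 Hce]]] := Hs.
have := Hc x => /cvgrPdist_lt /(_ 1 ltr01) [N0 _ HN].
exists (2 / c + \sum_(k < N0) `|estar k x|); split.
  by apply: ltr_wpDr; [apply: sumr_ge0 => *; exact: normr_ge0|apply: divr_gt0].
move=> k; case: (ltnP k N0) => hk.
  rewrite (bigD1 (Ordinal hk)) //= addrCA lerDl.
  apply: addr_ge0; first by apply: divr_ge0 => //; exact: ltW.
  by apply: sumr_ge0 => *; exact: normr_ge0.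
rewrite ler_wpDr //; first by apply: sumr_ge0 => *; exact: normr_ge0.
rewrite ler_pdivlMr // mulrC.
have h1 : `|x - \sum_(n < k) estar n x *: e n| < 1 by apply: HN.
have h2 : `|x - \sum_(n < k.+1) estar n x *: e n| < 1 by apply: HN; exact: leqW.
have -> : c * `|estar k x| =  `|estar k x| * c by rewrite mulrC.
apply: (le_trans (y := `|estar k x *: e k|)).
  by rewrite normrZ ler_wpM2l //; have /andP[] := Hce k.

rewrite big_ord_recr /= in h2.
have -> : estar k x *: e k = (x - \sum_(i < k) estar i x *: e i) -
   (x - (\sum_(i < k) estar i x *: e i + estar k x *: e k)).
  by rewrite opprB addrC addrA subrK (addrC (\sum_(i < k) _)) addrK.
apply: (le_trans (ler_normB _ _)).
have -> : (2 : K) = 1 + 1 by [].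
by apply: lerD; apply: ltW.
Qed.

Hypothesis Hw : Cw_le1 e estar.

Lemma sum_iota_filter (F : nat -> V) (S : seq nat) N :
  uniq S -> (forall j, j \in S -> (j < N)%N) ->
  \sum_(n <- iota 0 N | n \in S) F n = \sum_(j <- S) F j.
Proof.
move=> uS H; rewrite -big_filter; apply: perm_big; apply: uniq_perm.
- exact: filter_uniq (iota_uniq _ _).
- done.
move=> j; rewrite mem_filter mem_iota /= add0n.
by case: (boolP (j \in S)) => //= /H ->.
Qed.

Lemma supp (x : V) (S : seq nat) : uniq S -> `|greedy_sum e estar x S| <= `|x|.
Proof.
move=> uS.
set S' := [seq j <- S | estar j x != 0].
have -> : greedy_sum e estar x S = greedy_sum e estar x S'.
  rewrite /greedy_sum big_filter [RHS]big_mkcond /=; apply: eq_bigr => j _.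
  by case: (eqVneq (estar j x) 0) => [->|]; rewrite ?scale0r.
have uS' : uniq S' by apply: filter_uniq.
case HS' : S' => [|j0 s0].
  by rewrite /greedy_sum big_nil normr0 normr_ge0.
rewrite -HS'.
have [M [M0 HM]] := coef_bound x.
have pos : forall j, j \in S' -> 0 < `|estar j x|.
  by move=> j; rewrite mem_filter normr_gt0 => /andP[].
set m := (\sum_(j <- S') `|estar j x|^-1)^-1.
have sP : 0 < \sum_(j <- S') `|estar j x|^-1.
  rewrite HS' big_cons; apply: ltr_wpDr.
    by apply: sumr_ge0 => *; rewrite invr_ge0 normr_ge0.
  by rewrite invr_gt0 pos // HS' mem_head.
have m0 : 0 < m by rewrite invr_gt0 sP.
have mle : forall j, j \in S' -> m <= `|estar j x|.
  move=> j hj; rewrite -[`|estar j x|]invrK lef_pV2 ?posrE ?invr_gt0 ?pos ?sP //.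
  rewrite (big_rem j hj) /= lerDl.
  by apply: sumr_ge0 => *; rewrite invr_ge0 normr_ge0.
set r := m / (m + M).
have mM0 : 0 < m + M by apply: addr_gt0.
have r0 : 0 < r by apply: divr_gt0.
have r1 : 0 <= 1 - r.
  by rewrite subr_ge0 ler_pdivrMr // mul1r lerDl ltW.
have rM : r * M <= m.
  by rewrite mulrAC ler_pdivrMr // ler_pM2l // addrC lerDl ltW.
clearbody r.
set P := greedy_sum e estar x S'.
set b := fun n => if n \in S' then estar n x else 0.
have Hy : forall n, estar n (r *: x + (1 - r) *: P) = r * estar n x + (1 - r) * b n.
  apply: coef_eq.
  have -> : (fun N => \sum_(n < N) (r * estar n x + (1 - r) * b n) *: e n) =
     (fun N => r *: \sum_(n<N) estar n x *: e n + (1 - r) *: \sum_(n<N) b n *: e n).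
    apply: funext => N; rewrite !scaler_sumr -big_split /=; apply: eq_bigr => n _.
    by rewrite scalerDl !scalerA.
  apply: cvgD; first exact: cvgZl_tmp (Hc x).
  apply: cvgZl_tmp; apply: cvg_near_cst.
  exists (\max_(j <- S') j).+1 => // N /= hN.
  have hS : forall j, j \in S' -> (j < N)%N.
    by move=> i hi; apply: leq_trans hN; rewrite ltnS (leq_bigmax_seq i hi).
  rewrite -(big_mkord xpredT (fun n => b n *: e n)) /index_iota subn0.
  rewrite (eq_bigr (fun n => if n \in S' then estar n x *: e n else 0)); last first.
    by move=> n _; rewrite /b; case: ifP => _ //; rewrite scale0r.
  by rewrite -big_mkcond /= sum_iota_filter.
have gS' : greedy_set estar (r *: x + (1 - r) *: P) S'.
  split=> // j k hj hk; rewrite !Hy /b hj (negbTE hk) mulr0 addr0.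
  rewrite -mulrDl addrC subrK mul1r.
  rewrite normrM (ger0_norm (ltW r0)); apply: le_trans (mle j hj).
  by apply: le_trans rM; rewrite ler_wpM2l // ltW.
have gy : greedy_sum e estar (r *: x + (1 - r) *: P) S' = P.
  rewrite {2}/P /greedy_sum big_seq [RHS]big_seq; apply: eq_bigr => j hj.
  by rewrite Hy /b hj -mulrDl addrC subrK mul1r.
have h := Hw _ _ gS'; rewrite gy in h.
have h2 : `|P| <= r * `|x| + (1 - r) * `|P|.
  apply: (le_trans h); apply: (le_trans (ler_normD _ _)).
  by rewrite !normrZ !ger0_norm // ltW.
have : r * `|P| <= r * `|x|.
  rewrite -(lerD2r ((1 - r) * `|P|)); apply: (le_trans _ h2).
  by rewrite -mulrDl addrC subrK mul1r.
by rewrite ler_pM2l.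
Qed.

Lemma Ct (x : V) (A : seq nat) : uniq A -> `|x - greedy_sum e estar x A| <= `|x|.
Proof.
move=> uA; apply/ler_addgt0Pr => eps eps0.
have := Hc x => /cvgrPdist_lt /(_ eps eps0) [N0 _ HN].
set N := maxn N0 (\max_(j <- A) j).+1.
have hA : forall j, j \in A -> (j < N)%N.
  by move=> j hj; rewrite leq_max ltnS (leq_bigmax_seq j hj) // orbT.
have hN : `|x - \sum_(n < N) estar n x *: e n| < eps by apply: HN; rewrite /= leq_maxl.
have Hsplit : \sum_(n < N) estar n x *: e n - greedy_sum e estar x A =
    greedy_sum e estar x [seq n <- iota 0 N | n \notin A].
  rewrite /greedy_sum big_filter -(big_mkord xpredT (fun n => estar n x *: e n)).
  rewrite /index_iota subn0 (bigID (fun n => n \in A)) /= sum_iota_filter //.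
  by rewrite addrAC subrr add0r.
have := supp x _ (filter_uniq (fun n => n \notin A) (iota_uniq 0 N)).
rewrite -Hsplit => hs.
have -> : x - greedy_sum e estar x A = (x - \sum_(n < N) estar n x *: e n) +
   (\sum_(n < N) estar n x *: e n - greedy_sum e estar x A) by rewrite addrA subrK.
apply: (le_trans (ler_normD _ _)); rewrite addrC; apply: lerD => //; exact: ltW.
Qed.
End Gen.

Lemma claim_all (K : numFieldType) (V : normedModType K) : corollary_claim V.
Proof.
move=> e estar Hb Hc Hs Hw.
have Ht : Ct_le1 e estar by move=> x A [uA _]; exact: Ct.
by split; [|split].
Qed.

Theorem corollary2p2 (R : realType) :
  (forall V : completeNormedModType R, corollary_claim V) /\
  (forall V : completeNormedModType R[i], corollary_claim V).
Proof. by split=> V; apply: claim_all. Qed.
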